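(* Let a regular network on $n$ cells with adjacency matrix $A$ be given. There exists a 2-dimensional synchrony subspace if and only if $A$ has an eigenvector $w\in\mathbb{C}^n$ whose coordinates take exactly two distinct values.
   Context: A regular network is a finite directed graph on cells $1,\dots,n$ (loops and multiple arrows allowed) in which every cell receives the same number $v$ of arrows (the valency). Its adjacency matrix $A=[a_{ij}]$ has $a_{ij}$ equal to the number of arrows cell $i$ receives from cell $j$; every row sum is $v$. $A$ acts on $\mathbb{C}^n$. A polydiagonal is a subspace of $\mathbb{C}^n$ of the form $\{x : x_i=x_j \text{ for all } (i,j)\in R\}$ for some (possibly empty) set $R$ of index pairs. A synchrony subspace is a polydiagonal that is invariant under $A$. *)

(* Defs.v *)
From HB Require Import structures.
From mathcomp Require Import all_boot all_order all_algebra.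
Set Implicit Arguments. Unset Strict Implicit. Unset Printing Implicit Defensive.
Import Order.TTheory GRing.Theory Num.Theory.
Local Open Scope ring_scope.

(* A network on cells 'I_n is given by its adjacency matrix A : 'M[nat]_n,
   A i j = number of arrows cell i receives from cell j (loops and multiple
   arrows allowed). *)
Definition regular_network (n : nat) (A : 'M[nat]_n) : Prop :=
  exists v : nat, forall i : 'I_n, (\sum_(j < n) A i j)%N = v.

Definition adjC (C : fieldType) (n : nat) (A : 'M[nat]_n) : 'M[C]_n :=
  map_mx (fun k : nat => k%:R) A.

(* Subspaces of C^n are represented, as in mxalgebra, by the row space of a
   square matrix S; vectors of C^n are then row vectors x : 'rV_n. *)

Definition polydiagonal (C : fieldType) (n : nat) (S : 'M[C]_n) : Prop :=
  exists R : rel 'I_n, forall x : 'rV[C]_n,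
    (x <= S)%MS <-> (forall i j : 'I_n, R i j -> x 0 i = x 0 j).

(* Synchrony subspace: an A-invariant polydiagonal. With row vectors, the
   action x |-> A x of A on C^n reads x |-> x *m A^T. *)
Definition synchrony_subspace (C : fieldType) (n : nat) (A : 'M[nat]_n)
    (S : 'M[C]_n) : Prop :=
  polydiagonal S /\ (S *m (adjC C A)^T <= S)%MS.

Definition is_eigenvector (C : fieldType) (n : nat) (M : 'M[C]_n)
    (w : 'cV[C]_n) : Prop :=
  w != 0 /\ exists lambda : C, M *m w = lambda *: w.

Definition two_valued (C : fieldType) (n : nat) (w : 'cV[C]_n) : Prop :=
  exists a b : C, [/\ a != b,
    (forall i : 'I_n, w i 0 = a \/ w i 0 = b),
    (exists i : 'I_n, w i 0 = a) & (exists j : 'I_n, w j 0 = b)].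

(* Main.v *)
Require Import Defs.
From HB Require Import structures.
From mathcomp Require Import all_boot all_order all_algebra.
Import Order.TTheory GRing.Theory Num.Theory.
Local Open Scope ring_scope.

Lemma sum_delta (C : fieldType) n (F : 'I_n -> C) (i : 'I_n) :
  \sum_k F k * (k == i)%:R = F i.
Proof.
rewrite (bigD1 i) //= eqxx mulr1 big1 ?addr0 // => k /negbTE ->.
by rewrite mulr0.
Qed.

Lemma sum_ord2 (C : fieldType) (F : 'I_2 -> C) :
  \sum_(r < 2) F r = F ord0 + F (lift ord0 ord0).
Proof. by rewrite !big_ord_recl big_ord0 addr0. Qed.

Section Two.
Variables (C : numClosedFieldType) (n : nat) (f : 'I_n -> C) (i0 j0 : 'I_n).
Hypothesis hij : f j0 != f i0.

Definition yP : 'rV[C]_n := \row_k (if f k == f i0 then 1 else 0).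
Definition UU : 'M[C]_(2, n) := \matrix_(r < 2, k < n)
  (if (r : nat) == 0%N then (if f k == f i0 then 1 else 0)
   else (if f k == f i0 then 0 else 1)).

Lemma rankUU : \rank UU = 2%N.
Proof.
have hj : (j0 == i0) = false by apply/eqP => e; move: hij; rewrite e eqxx.
apply/eqP; apply/row_freeP.
exists (\matrix_(k < n, r < 2) (if (r : nat) == 0%N then (k == i0)%:R else (k == j0)%:R)).
apply/matrixP => r s; rewrite !mxE.
under eq_bigr do rewrite !mxE.
case: r => [[|[|r]] hr] //; case: s => [[|[|s]] hs] //=.
- by rewrite (eq_bigr (fun k => (if f k == f i0 then 1 else 0) * (k == i0)%:R)) // sum_delta eqxx.
- rewrite (eq_bigr (fun k => (if f k == f i0 then 1 else 0) * (k == j0)%:R)) // sum_delta.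
  by rewrite (negbTE hij).
- by rewrite (eq_bigr (fun k => (if f k == f i0 then 0 else 1) * (k == i0)%:R)) // sum_delta eqxx.
- rewrite (eq_bigr (fun k => (if f k == f i0 then 0 else 1) * (k == j0)%:R)) // sum_delta.
  by rewrite (negbTE hij).
Qed.

Lemma subUU (z : 'rV[C]_n) :
  (z <= UU)%MS <-> (forall k, z 0 k = if f k == f i0 then z 0 i0 else z 0 j0).
Proof.
split.
- move/submxP => [D ->] k.
  have gen : forall k, (D *m UU) 0 k = if f k == f i0 then D 0 ord0 else D 0 (lift ord0 ord0).
    move=> l; rewrite mxE sum_ord2 !mxE /=.
    by case: ifP => _; rewrite ?mulr1 ?mulr0 ?addr0 ?add0r.
  by rewrite !gen eqxx (negbTE hij); case: ifP.
- move=> H; apply/submxP.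
  exists (\row_(r < 2) (if (r : nat) == 0%N then z 0 i0 else z 0 j0)).
  apply/rowP => k; rewrite mxE sum_ord2 !mxE /= H.
  by case: ifP => _; rewrite ?mulr1 ?mulr0 ?addr0 ?add0r.
Qed.

End Two.
Arguments yP {C n} f i0.
Arguments UU {C n} f i0.
Arguments rankUU {C n f i0 j0}.
Arguments subUU {C n f i0 j0}.
From mathcomp Require Import ring.

Section Count.
Variables (C : numClosedFieldType) (n : nat) (A : 'M[nat]_n) (f : 'I_n -> C) (i0 : 'I_n).

Definition cP k := (\sum_(j | f j == f i0) A k j)%N.
Definition cQ k := (\sum_(j | f j != f i0) A k j)%N.

Lemma cPQ k : (cP k + cQ k = \sum_j A k j)%N.
Proof. by rewrite /cP /cQ [RHS](bigID (fun j => f j == f i0)). Qed.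

Lemma sumA (al be : C) k :
  \sum_j (A k j)%:R * (if f j == f i0 then al else be) =
  al * (cP k)%:R + be * (cQ k)%:R.
Proof.
rewrite (bigID (fun j => f j == f i0)) /= /cP /cQ !natr_sum !mulr_sumr.
by congr (_ + _); apply: eq_bigr => j hj; rewrite ?hj ?(negbTE hj) mulrC.
Qed.

Lemma colA (al be : C) k :
  (adjC C A *m \col_j (if f j == f i0 then al else be)) k 0 =
  al * (cP k)%:R + be * (cQ k)%:R.
Proof. rewrite mxE -sumA; apply: eq_bigr => j _; by rewrite !mxE. Qed.

Lemma rowA (al be : C) k :
  ((\row_j (if f j == f i0 then al else be)) *m (adjC C A)^T) 0 k =
  al * (cP k)%:R + be * (cQ k)%:R.
Proof. rewrite mxE -sumA; apply: eq_bigr => j _; by rewrite !mxE mulrC. Qed.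

End Count.
Arguments cP {C n} A f i0 k.
Arguments cQ {C n} A f i0 k.
Arguments cPQ {C n} A f i0 k.
Arguments sumA {C n} A f i0 al be k.
Arguments colA {C n} A f i0 al be k.
Arguments rowA {C n} A f i0 al be k.

Theorem mainTheorem8 (C : numClosedFieldType) (n : nat) (A : 'M[nat]_n) :
  regular_network A ->
  ((exists S : 'M[C]_n, synchrony_subspace A S /\ \rank S = 2%N) <->
   (exists w : 'cV[C]_n, is_eigenvector (adjC C A) w /\ two_valued w)).
Proof.
move=> [v hv].
have cQv : forall (f : 'I_n -> C) i0 k, ((cQ A f i0 k)%:R : C) = v%:R - (cP A f i0 k)%:R.
  by move=> f i0 k; rewrite -(hv k) -(cPQ A f i0 k) natrD; ring.
split.
- move=> [S [[[R HR] inv] rS]].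
  have [/existsP [r /existsP [i0 /existsP [j0 hne]]] | hall] :=
    boolP [exists r, exists i, exists j, S r i != S r j].
  + pose f := fun k => S r k.
    have hij : f j0 != f i0 by rewrite /f eq_sym.
    have Rf : forall i j, R i j -> f i = f j.
      move=> i j hR; have := (proj1 (HR (row r S)) (row_sub r S)) i j hR.
      by rewrite !mxE.
    have inS : forall z : 'rV[C]_n, (forall i j, f i = f j -> z 0 i = z 0 j) -> (z <= S)%MS.
      by move=> z hz; apply/(HR z) => i j /Rf; apply: hz.
    have US : (UU f i0 <= S)%MS.
      apply/row_subP => s; apply: inS => i j e; by rewrite !mxE e.
    have SU : (S <= UU f i0)%MS.
      have := (mxrank_leqif_sup US).2; by rewrite (rankUU hij) rS eqxx => <-.
    pose y := \row_j (if f j == f i0 then (1:C) else 0).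
    have yS : (y <= S)%MS by apply: inS => i j e; rewrite !mxE e.
    have zU : (y *m (adjC C A)^T <= UU f i0)%MS.
      exact: submx_trans (submx_trans (submxMr _ yS) inv) SU.
    have zk := proj1 (subUU hij _) zU.
    have cPk : forall k, ((cP A f i0 k)%:R : C) =
        if f k == f i0 then (cP A f i0 i0)%:R else (cP A f i0 j0)%:R.
      move=> k; have := zk k; by rewrite /y !rowA !mul1r !mul0r !addr0.
    have [q0 | qn0] := eqVneq (cP A f i0 j0) 0%N.
    * exists (\col_j (if f j == f i0 then (1:C) else 0)); split; last first.
        exists 1, 0; split => //; first exact: oner_neq0.
          by move=> i; rewrite mxE; case: ifP; [left|right].
          by exists i0; rewrite mxE eqxx.
          by exists j0; rewrite mxE (negbTE hij).
      split.
        apply/eqP => e; have := congr1 (fun M : 'cV_n => M i0 0) e.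
        by rewrite !mxE eqxx => /eqP; rewrite oner_eq0.
      exists (cP A f i0 i0)%:R; apply/colP => k.
      rewrite colA mul1r mul0r addr0 cPk !mxE q0.
      by case: ifP; rewrite ?mulr1 ?mulr0.
    * pose a : C := (cQ A f i0 i0)%:R; pose b : C := - (cP A f i0 j0)%:R.
      have hab : a != b.
        apply/negP => /eqP e.
        have : ((cQ A f i0 i0 + cP A f i0 j0)%N%:R : C) = 0.
          by rewrite natrD -/a e /b addNr.
        move/eqP; rewrite pnatr_eq0 addn_eq0 => /andP [_ h].
        by move: qn0; rewrite h.
      exists (\col_j (if f j == f i0 then a else b)); split; last first.
        exists a, b; split => //.
          by move=> i; rewrite mxE; case: ifP; [left|right].
          by exists i0; rewrite mxE eqxx.
          by exists j0; rewrite mxE (negbTE hij).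
      split.
        apply/eqP => e.
        have e1 := congr1 (fun M : 'cV_n => M i0 0) e.
        have e2 := congr1 (fun M : 'cV_n => M j0 0) e.
        move: e1 e2; rewrite !mxE eqxx (negbTE hij) => e1 e2.
        by move: hab; rewrite e1 e2 eqxx.
      exists ((cP A f i0 i0)%:R - (cP A f i0 j0)%:R); apply/colP => k.
      rewrite colA cQv cPk !mxE /a /b cQv.
      by case: ifP => _; ring.
  + exfalso.
    have : (S <= (const_mx 1 : 'rV[C]_n))%MS.
      apply/row_subP => r.
      have -> : row r S = S r r *: const_mx 1.
        apply/rowP => k; rewrite !mxE mulr1.
        apply/eqP; apply: contraNT hall => hk.
        by apply/existsP; exists r; apply/existsP; exists k; apply/existsP; exists r.
      by apply: scalemx_sub.
    move/mxrankS; rewrite rS => h.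
    by have := leq_trans h (rank_leq_row _).
- move=> [w [[w0 [lam hlam]] [a [b [hab hw [i0 hi0] [j0 hj0]]]]]].
  pose f := fun k => w k 0.
  have hij : f j0 != f i0 by rewrite /f hi0 hj0 eq_sym.
  have wf : forall k, w k 0 = if f k == f i0 then a else b.
    move=> k; rewrite /f hi0; by case: (hw k) => ->; rewrite ?eqxx // eq_sym (negbTE hab).
  have fk : forall k, f k != f i0 -> f k = f j0.
    move=> k; rewrite /f hi0 hj0; by case: (hw k) => ->; rewrite ?eqxx.
  have dep : forall (z : 'rV[C]_n), (forall i j, f i = f j -> z 0 i = z 0 j) ->
      (z <= UU f i0)%MS.
    move=> z hz; apply/(subUU hij) => k.
    case: ifP => /eqP e; first exact: hz.
    by apply: hz; apply: fk; apply/eqP.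
  exists <<UU f i0>>%MS; split; last by rewrite genmxE (rankUU hij).
  split.
    exists (fun i j => f i == f j) => x; rewrite genmxE; split.
      by move/(subUU hij) => hx i j /eqP e; rewrite (hx i) (hx j) e.
    by move=> hx; apply: dep => i j /eqP; apply: hx.
  rewrite (eqmxMr _ (genmxE _)) genmxE.
  have hw' : w = \col_j (if f j == f i0 then a else b) by apply/colP => k; rewrite mxE wf.
  have eig : forall k, a * (cP A f i0 k)%:R + b * (cQ A f i0 k)%:R = lam * f k.
    move=> k; rewrite -colA -hw' hlam !mxE //.
  have cPd : forall i j, f i = f j -> ((cP A f i0 i)%:R : C) = (cP A f i0 j)%:R.
    move=> i j e; apply: (mulfI (x := a - b)); first by rewrite subr_eq0.
    have ei := eig i; have ej := eig j; rewrite !cQv in ei ej.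
    have : (a - b) * (cP A f i0 i)%:R = lam * f i - b * v%:R by rewrite -ei; ring.
    have : (a - b) * (cP A f i0 j)%:R = lam * f j - b * v%:R by rewrite -ej; ring.
    by move=> -> ->; rewrite e.
  apply/row_subP => s; rewrite row_mul; apply: dep => i j e.
  have -> : row s (UU f i0) = \row_k (if f k == f i0 then (s == 0 :> nat)%:R else (s != 0 :> nat)%:R).
    by apply/rowP => k; rewrite !mxE; case: (s : nat) => [|?] /=; case: ifP.
  by rewrite !rowA !cQv (cPd i j e).
Qed.
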